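(* Let $n$ be a prime and $1\le a_1<a_2\le n/2$ integers, and let $\lambda_j=\omega^{a_1 j}+\omega^{-a_1 j}+\omega^{a_2 j}+\omega^{-a_2 j}$, $j=0,\dots,n-1$, with $\omega=e^{2\pi i/n}$, be the eigenvalues of $A(C_n(a_1,a_2))$ (with eigenvector $(1,\omega^j,\dots,\omega^{(n-1)j})$ for $\lambda_j$). (i) If $n\nmid a_1^2+a_2^2$, then $A(C_n(a_1,a_2))$ has the simple eigenvalue $\lambda_0=4$, and every other eigenvalue has multiplicity exactly two; more precisely, for $j,k\in\{1,\dots,n-1\}$, $\lambda_j=\lambda_k$ if and only if $j=k$ or $n\mid j+k$. (ii) If $n\mid a_1^2+a_2^2$, then for $j,k\in\{1,\dots,n-1\}$, $\lambda_j=\lambda_k$ if and only if $j=k$, or $n\mid j+k$, or $n\mid j^2+k^2$.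
   Context: A circulant graph $C_n(a_1,a_2)$, with integers $1\le a_1<a_2\le n/2$, has vertex set $\{0,1,\dots,n-1\}$, and $i\sim j$ if and only if $i-j\equiv\pm a_1$ or $\pm a_2\pmod n$. Its adjacency matrix $A(C_n(a_1,a_2))$ is the $n\times n$ matrix with $A_{ij}=1$ if $i\sim j$ and $0$ otherwise. *)

(* Defs.v *)
From mathcomp Require Import all_boot all_order all_algebra.
From mathcomp Require Import reals trigo.
From mathcomp.real_closed Require Import complex.
Import GRing.Theory Num.Theory.
Local Open Scope ring_scope.
Local Open Scope complex_scope.

Definition omega (R : realType) (n : nat) : R[i] :=
  (cos (2 * pi / n%:R))%:C + 'i * (sin (2 * pi / n%:R))%:C.

Definition circ_eig (R : realType) (n a1 a2 j : nat) : R[i] :=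
  let w := omega R n in
  w ^+ (a1 * j) + w ^- (a1 * j) + w ^+ (a2 * j) + w ^- (a2 * j).

Definition circ_adj (R : realType) (n a1 a2 : nat) : 'M[R[i]]_n :=
  \matrix_(i < n, j < n)
    (if [|| (i + a1) %% n == j, (j + a1) %% n == i,
            (i + a2) %% n == j | (j + a2) %% n == i]%N
     then 1 else 0).

Definition eig_mult (R : realType) (n a1 a2 : nat) (x : R[i]) : nat :=
  #|[set j : 'I_n | circ_eig R n a1 a2 j == x]|.

(* Main.v *)
Require Import Defs.
From mathcomp Require Import all_boot all_order all_algebra.
From mathcomp Require Import reals trigo.
From mathcomp.real_closed Require Import complex.
From mathcomp Require Import all_field.
From mathcomp Require Import ring lra zify.
Import GRing.Theory Num.Theory.
Local Open Scope ring_scope.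

Section OmegaSec.
Local Open Scope complex_scope.

Definition expi {R : realType} (t : R) : R[i] := (cos t)%:C + 'i%C * (sin t)%:C.

Lemma expiD (R : realType) (a b : R) : expi (a + b) = expi a * expi b.
Proof.
rewrite /expi cosD sinD.
by apply/eqP; rewrite eq_complex /=; apply/andP; split; apply/eqP; ring.
Qed.

Lemma expi0 (R : realType) : expi (0 : R) = 1.
Proof. by apply/eqP; rewrite /expi cos0 sin0 eq_complex /=; apply/andP; split; apply/eqP; ring. Qed.

Lemma expi_nat (R : realType) (t : R) k : expi (k%:R * t) = expi t ^+ k.
Proof.
elim: k => [|k IH]; first by rewrite mul0r expi0 expr0.
by rewrite -addn1 natrD mulrDl mul1r expiD IH exprD expr1.
Qed.

Lemma Im_expi (R : realType) (t : R) : complex.Im (expi t) = sin t.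
Proof. by rewrite /expi /=; ring. Qed.

Lemma omega_prim (R : realType) n : prime n -> (2 < n)%N -> n.-primitive_root (omega R n).
Proof.
move=> pn n2.
have n0 : (n%:R : R) != 0 by rewrite pnatr_eq0 -lt0n prime_gt0.
have oE : omega R n = expi (2 * pi / n%:R) by [].
have on : omega R n ^+ n = 1.
  rewrite oE -expi_nat mulrC divfK // mulr_natl.
  by apply/eqP; rewrite /expi cos2pi sin2pi eq_complex /=; apply/andP; split; apply/eqP; ring.
have o1 : omega R n != 1.
  apply/eqP => /(congr1 (@complex.Im R)); rewrite oE Im_expi /= => /eqP.
  apply/negP; apply: lt0r_neq0; apply: sin_gt0_pi.
  have np : (0 : R) < n%:R by rewrite ltr0n prime_gt0.
  have pp := pi_gt0 R.
  rewrite divr_gt0 ?mulr_gt0 //= ltr_pdivrMr // -subr_gt0.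
  have : (2 : R) < n%:R by rewrite ltr_nat.
  nra.
have [m pm mn] := prim_order_exists (prime_gt0 pn) on.
case/primeP: pn => _ /(_ m mn) /orP [/eqP m1|/eqP mE]; last by rewrite mE in pm.
by move: (prim_expr_order pm); rewrite m1 expr1 => /eqP; rewrite (negbTE o1).
Qed.

End OmegaSec.


Definition SP (F : nzRingType) (n : nat) : {poly F} := \poly_(i < n) 1.

Lemma SP_horner (F : nzRingType) n (w : F) : (SP F n).[w] = \sum_(i < n) w ^+ i.
Proof. by rewrite /SP horner_poly; apply: eq_bigr => i _; rewrite mul1r. Qed.

Lemma SP_map (F : fieldType) (K : nzRingType) (f : {rmorphism F -> K}) n :
  map_poly f (SP F n) = SP K n.
Proof.
apply/polyP => i; rewrite coef_map !coef_poly; case: ifP => _ /=; by rewrite ?rmorph1 ?rmorph0.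
Qed.

Lemma size_SP (F : nzRingType) n : size (SP F n) = n.
Proof. by rewrite /SP size_poly_eq // oner_neq0. Qed.

Lemma SP_prim (F : fieldType) n (w : F) : (1 < n)%N -> n.-primitive_root w ->
  \sum_(i < n) w ^+ i = 0.
Proof.
move=> n1 pw; have := subrX1 w n; rewrite (prim_expr_order pw) subrr => /esym/eqP.
rewrite mulf_eq0 subr_eq0 => /orP [/eqP w1|/eqP //].
by move: (prim_order_dvd pw 1); rewrite w1 expr1n eqxx dvdn1 => /eqP n1'; rewrite n1' in n1.
Qed.

Lemma prim_SP (F : fieldType) n (w : F) : prime n -> n%:R != 0 :> F ->
  \sum_(i < n) w ^+ i = 0 -> n.-primitive_root w.
Proof.
move=> pn n0 s0.
have wn : w ^+ n = 1 by apply/eqP; rewrite -subr_eq0 subrX1 s0 mulr0.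
have w1 : w != 1.
  apply/eqP => w1; move: s0; rewrite w1.
  under eq_bigr do rewrite expr1n.
  by rewrite sumr_const card_ord; move/eqP: n0.
have [m pm mn] := prim_order_exists (prime_gt0 pn) wn.
case/primeP: pn => _ /(_ m mn) /orP [/eqP m1|/eqP mE]; last by rewrite mE in pm.
by move: (prim_expr_order pm); rewrite m1 expr1 => /eqP; rewrite (negbTE w1).
Qed.

Lemma factA n (w : algC) (r : {poly rat}) : prime n -> n.-primitive_root w ->
  root (map_poly ratr r) w -> SP rat n %| r.
Proof.
move=> pn pw rw.
have [p [Hmin _] Hdiv] := minCpolyP w.
have Hpr : p %| r by rewrite -Hdiv.
have HpS : p %| SP rat n by rewrite -Hdiv SP_map /root SP_horner SP_prim ?prime_gt1.
have szp : size p = n.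
  rewrite -(size_map_poly (ratr : {rmorphism rat -> algC})) -Hmin.
  by rewrite (minCpoly_cyclotomic pw) size_cyclotomic totient_prime // prednK // prime_gt0.
have : p %= SP rat n by rewrite -dvdp_size_eqp // szp size_SP.
by move/eqp_dvdl <-.
Qed.


Lemma keyQ (F : numFieldType) n (z : F) (q : {poly rat}) : prime n -> n.-primitive_root z ->
  (size q <= n)%N -> root (map_poly ratr q) z -> q.[1] = 0 -> q = 0.
Proof.
move=> pn pz szq rq q1.
set S := SP rat n.
have n1 := prime_gt1 pn.
have rS : root (map_poly (ratr : {rmorphism rat -> F}) S) z.
  by rewrite /root SP_map SP_horner SP_prim.
have S0 : S != 0 by rewrite -size_poly_eq0 size_SP -lt0n prime_gt0.
set g := gcdp q S.
have rg : root (map_poly (ratr : {rmorphism rat -> F}) g) z by rewrite gcdp_map root_gcd rq rS.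
have g0 : g != 0 by rewrite gcdp_eq0 negb_and S0 orbT.
have sg : size (map_poly (ratr : {rmorphism rat -> algC}) g) != 1%N.
  rewrite size_map_poly; apply/negP => /size_poly1P [c c0 gE].
  by move: rg; rewrite gE map_polyC /root hornerC fmorph_eq0 (negbTE c0).
have [w rw] := closed_rootP _ sg.
have rSw : root (map_poly (ratr : {rmorphism rat -> algC}) S) w.
  by apply: root_dvdp rw; rewrite dvdp_map dvdp_gcdr.
have pw : n.-primitive_root w.
  apply: prim_SP => //; first by rewrite pnatr_eq0 -lt0n prime_gt0.
  by move: rSw; rewrite SP_map /root SP_horner => /eqP.
have Sg : S %| g := factA n w g pn pw rw.

have Sq : S %| q := dvdp_trans Sg (dvdp_gcdl _ _).
case/dvdpP: Sq => h qE.
have [h0|h0] := eqVneq h 0; first by rewrite qE h0 mul0r.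
have : (size h <= 1)%N.
  move: szq; rewrite qE size_mul // size_SP.
  have : size h != 0%N by rewrite size_poly_eq0.
  move: (size h) => k; rewrite -subn1; lia.
move/size1_polyC => hE.
move: q1; rewrite qE hornerM SP_horner hE hornerC.
under eq_bigr do rewrite expr1n.
rewrite sumr_const card_ord => /eqP; rewrite mulf_eq0 pnatr_eq0 orbC.
have -> : (n == 0)%N = false by apply/negbTE; rewrite -lt0n prime_gt0.
by move/eqP => c0; move: h0; rewrite hE c0 eqxx.
Qed.


Definition res (n : nat) (x : int) : nat := `|(x %% n)%Z|%N.

Lemma resE n x : (0 < n)%N -> (res n x)%:Z = (x %% n)%Z.
Proof. by move=> n0; rewrite /res gez0_abs // modz_ge0 // eqz_nat -lt0n. Qed.

Lemma res_lt n x : (0 < n)%N -> (res n x < n)%N.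
Proof. by move=> n0; rewrite -ltz_nat resE // ltz_pmod // ltz_nat. Qed.

Lemma res_eq n x y : (0 < n)%N -> (res n x == res n y) = (x == y %[mod n])%Z.
Proof. by move=> n0; rewrite -eqz_nat !resE. Qed.

Lemma sum_nat_count (K : nzRingType) (T : Type) (s : seq T) (P : pred T) :
  \sum_(x <- s) ((P x)%:R : K) = (count P s)%:R.
Proof. elim: s => [|a s IH]; first by rewrite big_nil. by rewrite big_cons IH /= natrD. Qed.

Lemma sum_one (K : nzRingType) (T : Type) (s : seq T) :
  \sum_(x <- s) (1 : K) = (size s)%:R.
Proof. elim: s => [|a s IH]; first by rewrite big_nil. by rewrite big_cons IH /= -addn1 natrD addrC. Qed.

Section Vanish.
Variables (F : numFieldType) (n : nat) (z : F).
Hypotheses (pn : prime n) (pz : n.-primitive_root z).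

Lemma n_gt0 : (0 < n)%N. Proof. exact: prime_gt0. Qed.

Lemma expz_res x : z ^ x = z ^+ res n x.
Proof.
have z0 : z != 0.
  apply/eqP => z0; move: (prim_expr_order pz); rewrite z0 expr0n.
  have := n_gt0; rewrite lt0n => /negbTE -> /eqP; by rewrite eq_sym oner_eq0.
rewrite {1}(divz_eq x n) (mulrC (x %/ n)%Z) expfzDr // -exprz_exp.
have -> : z ^ (n : int) = 1 by exact: (prim_expr_order pz).
by rewrite exp1rz mul1r -resE ?n_gt0.
Qed.

Lemma expz_eq x y : (z ^ x == z ^ y) = (x == y %[mod n])%Z.
Proof.
rewrite !expz_res (eq_prim_root_expr pz) !modn_small ?res_lt ?n_gt0 //.
by rewrite res_eq ?n_gt0.
Qed.

Lemma vanish (s t : seq int) : size s = size t ->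
  \sum_(x <- s) z ^ x = \sum_(x <- t) z ^ x ->
  forall x0, x0 \in s -> exists2 y, y \in t & (x0 == y %[mod n])%Z.
Proof.
move=> st Est x0 x0s.
pose q : {poly rat} := \sum_(x <- s) 'X^(res n x) - \sum_(x <- t) 'X^(res n x).
have q0 : q = 0.
  apply: (@keyQ F n z q pn pz).
  - apply/leq_sizeP => j jn; rewrite coefB !coef_sum !big1_seq ?subrr // => x _;
    rewrite coefXn; case: eqP => // jE; have := @res_lt n x n_gt0; rewrite -jE; lia.
  - rewrite /root /q rmorphB !rmorph_sum hornerD hornerN !horner_sum /=.
    under eq_bigr do rewrite map_polyXn hornerXn -expz_res.
    under [X in _ - X]eq_bigr do rewrite map_polyXn hornerXn -expz_res.
    by rewrite Est subrr.
  - rewrite /q hornerD hornerN !horner_sum.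
    under eq_bigr do rewrite hornerXn expr1n.
    under [X in _ - X]eq_bigr do rewrite hornerXn expr1n.
    by rewrite !sum_one st subrr.
have := congr1 (fun p : {poly rat} => p`_(res n x0)) q0.
rewrite /q coefB !coef_sum coef0.
under eq_bigr do rewrite coefXn.
under [X in _ - X]eq_bigr do rewrite coefXn.
rewrite !sum_nat_count => /eqP; rewrite subr_eq0 eqr_nat => /eqP ct.
have : (0 < count (fun x => res n x0 == res n x) t)%N.
  rewrite -ct -has_count; apply/hasP; exists x0 => //.
rewrite -has_count => /hasP [y yt ry]; exists y => //.
by rewrite -res_eq ?n_gt0.
Qed.

End Vanish.


Lemma primeM (p : nat) (x y : int) : prime p -> (p %| x * y)%Z = (p %| x)%Z || (p %| y)%Z.
Proof. by move=> pp; rewrite !dvdzE abszM Euclid_dvdM. Qed.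

Lemma dvd_sq (p : nat) (x y : int) : (p %| x - y)%Z -> (p %| x ^+ 2 - y ^+ 2)%Z.
Proof. move=> h; have -> : x ^+ 2 - y ^+ 2 = (x - y) * (x + y) by ring. exact: dvdz_mulr. Qed.

Lemma dvd_sqN (p : nat) (x y : int) : (p %| x + y)%Z -> (p %| x ^+ 2 - y ^+ 2)%Z.
Proof. move=> h; have -> : x ^+ 2 - y ^+ 2 = (x - y) * (x + y) by ring. exact: dvdz_mull. Qed.

Lemma sq_dvd (p : nat) (x y : int) : prime p -> (p %| x ^+ 2 - y ^+ 2)%Z ->
  (p %| x - y)%Z \/ (p %| x + y)%Z.
Proof.
move=> pp; have -> : x ^+ 2 - y ^+ 2 = (x - y) * (x + y) by ring.
by rewrite primeM // => /orP [] ?; [left|right].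
Qed.

Lemma NT (p : nat) (A B J K : int) : prime p -> ~~ (p %| A)%Z -> ~~ (p %| B)%Z ->
  ~~ (p %| A - B)%Z ->
  ((p %| A * J - A * K)%Z \/ (p %| A * J - B * K)%Z) ->
  ((p %| B * J - A * K)%Z \/ (p %| B * J - B * K)%Z) ->
  (p %| J - K)%Z \/ ((p %| A + B)%Z /\ (p %| J + K)%Z).
Proof.
move=> pp nA nB nAB [h1|h1] h2.
  left; move: h1; have -> : A * J - A * K = A * (J - K) by ring.
  by rewrite primeM // (negbTE nA).
case: h2 => h2; last first.
  left; move: h2; have -> : B * J - B * K = B * (J - K) by ring.
  by rewrite primeM // (negbTE nB).
have hs : (p %| (A - B) * (J + K))%Z.
  have -> : (A - B) * (J + K) = (A * J - B * K) - (B * J - A * K) by ring.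
  exact: rpredB.
have ha : (p %| (A + B) * (J - K))%Z.
  have -> : (A + B) * (J - K) = (A * J - B * K) + (B * J - A * K) by ring.
  exact: rpredD.
move: hs; rewrite primeM // (negbTE nAB) /= => hJK.
move: ha; rewrite primeM // => /orP [hAB|]; last by left.
by right.
Qed.

Lemma natdvdz (p m : nat) : (p %| m%:Z)%Z = (p %| m)%N.
Proof. by rewrite dvdzE absz_nat. Qed.

Lemma PoszX (m k : nat) : Posz (m ^ k) = (Posz m) ^+ k.
Proof. by rewrite -!natz natrX. Qed.

Lemma dvd_sub_eq (n j k : nat) : (j < n)%N -> (k < n)%N -> (n %| j%:Z - k%:Z)%Z -> j = k.
Proof.
move=> jn kn; rewrite -eqz_mod_dvd /= !modz_nat eqz_nat !modn_small //.
by move/eqP.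
Qed.


Lemma NT2 (p : nat) (a b j k : int) : prime p -> ~~ (p %| a)%Z -> ~~ (p %| b)%Z ->
  ~~ (p %| a - b)%Z -> ~~ (p %| a + b)%Z ->
  ((p %| (a * j) ^+ 2 - (a * k) ^+ 2)%Z \/ (p %| (a * j) ^+ 2 - (b * k) ^+ 2)%Z) ->
  ((p %| (b * j) ^+ 2 - (a * k) ^+ 2)%Z \/ (p %| (b * j) ^+ 2 - (b * k) ^+ 2)%Z) ->
  [\/ (p %| j - k)%Z, (p %| j + k)%Z | (p %| a ^+ 2 + b ^+ 2)%Z /\ (p %| j ^+ 2 + k ^+ 2)%Z].
Proof.
move=> pp na nb nab nab' h1 h2.
have na2 : ~~ (p %| a ^+ 2)%Z by rewrite expr2 primeM // orbb.
have nb2 : ~~ (p %| b ^+ 2)%Z by rewrite expr2 primeM // orbb.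
have nab2 : ~~ (p %| a ^+ 2 - b ^+ 2)%Z.
  have -> : a ^+ 2 - b ^+ 2 = (a - b) * (a + b) by ring.
  by rewrite primeM // negb_or nab nab'.
rewrite !exprMn in h1 h2.
case: (NT p _ _ _ _ pp na2 nb2 nab2 h1 h2) => [/(@sq_dvd p _ _ pp) [] ?| []]; by constructor.
Qed.

Lemma dvd_sum_eq (n i j : nat) : (0 < i < n)%N -> (0 < j < n)%N -> (n %| i + j)%N -> i = (n - j)%N.
Proof.
move=> hi hj h.
case: (ltnP (i + j) n) => c.
  by move: h; rewrite gtnNdvd //; lia.
have h2 : (n %| i + j - n)%N by rewrite dvdn_sub.
have [e|pos] := posnP (i + j - n)%N; first by lia.
by move: h2; rewrite gtnNdvd //; lia.
Qed.

Section Main.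
Variables (R : realType) (n a1 a2 : nat).
Hypotheses (pn : prime n) (ha1 : (1 <= a1)%N) (ha12 : (a1 < a2)%N) (ha2 : (2 * a2 <= n)%N).

Let z := omega R n.
Let n2 : (2 < n)%N.
Proof.
have := prime_gt1 pn; have : n != 2%N by apply/eqP => n2; move: ha2 ha12 ha1; rewrite n2; lia.
lia.
Qed.
Let pz : n.-primitive_root z := omega_prim R n pn n2.

Definition Fz (x : int) : R[i] := z ^ x + z ^ (- x).

Lemma eigE j : circ_eig R n a1 a2 j = Fz (a1 * j)%N + Fz (a2 * j)%N.
Proof. by rewrite /circ_eig /Fz !exprnN !addrA. Qed.

Lemma Fz_eq x y : (n %| x ^+ 2 - y ^+ 2)%Z -> Fz x = Fz y.
Proof.
move=> /(@sq_dvd n _ _ pn) [h|h]; rewrite /Fz.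
  have -> : z ^ x = z ^ y by apply/eqP; rewrite (@expz_eq _ _ _ pn pz) eqz_mod_dvd.
  have -> // : z ^ (- x) = z ^ (- y).
  apply/eqP; rewrite (@expz_eq _ _ _ pn pz) eqz_mod_dvd.
  have -> : - x - - y = - (x - y) by ring.
  by rewrite rpredN.
have -> : z ^ x = z ^ (- y).
  apply/eqP; rewrite (@expz_eq _ _ _ pn pz) eqz_mod_dvd.
  by have -> : x - - y = x + y by ring.
have -> : z ^ (- x) = z ^ y.
  apply/eqP; rewrite (@expz_eq _ _ _ pn pz) eqz_mod_dvd.
  have -> : - x - y = - (x + y) by ring.
  by rewrite rpredN.
by rewrite addrC.
Qed.

Lemma memt x y y1 y2 : y \in [:: y1; - y1; y2; - y2] -> (n %| x - y)%Z ->
  (n %| x ^+ 2 - y1 ^+ 2)%Z \/ (n %| x ^+ 2 - y2 ^+ 2)%Z.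
Proof.
rewrite !inE => /or4P [] /eqP -> /(@dvd_sq n); rewrite ?sqrrN; by [left|right].
Qed.

Lemma fwd x1 x2 y1 y2 : Fz x1 + Fz x2 = Fz y1 + Fz y2 ->
  ((n %| x1 ^+ 2 - y1 ^+ 2)%Z \/ (n %| x1 ^+ 2 - y2 ^+ 2)%Z) /\
  ((n %| x2 ^+ 2 - y1 ^+ 2)%Z \/ (n %| x2 ^+ 2 - y2 ^+ 2)%Z).
Proof.
move=> E.
have H := @vanish _ n z pn pz [:: x1; - x1; x2; - x2] [:: y1; - y1; y2; - y2] erefl.
have Hs : \sum_(x <- [:: x1; - x1; x2; - x2]) z ^ x = \sum_(x <- [:: y1; - y1; y2; - y2]) z ^ x.
  by rewrite !big_cons big_nil !addr0 !addrA; move: E; rewrite /Fz !addrA.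
split.
  have [y yt hy] := H Hs x1 (mem_head _ _).
  by apply: memt yt _; rewrite -eqz_mod_dvd.
have [y yt hy] := H Hs x2 ltac:(by rewrite !inE eqxx !orbT).
by apply: memt yt _; rewrite -eqz_mod_dvd.
Qed.


Lemma ndvd_nat m : (0 < m < n)%N -> ~~ (n %| m%:Z)%Z.
Proof. by rewrite natdvdz => /andP [m0 mn]; rewrite gtnNdvd. Qed.

Lemma Heq j k : (0 < j < n)%N -> (0 < k < n)%N ->
  (circ_eig R n a1 a2 j = circ_eig R n a1 a2 k <->
   [\/ j = k, (n %| j + k)%N | (n %| a1 ^ 2 + a2 ^ 2)%N /\ (n %| j ^ 2 + k ^ 2)%N]).
Proof.
move=> hj hk.
have jn : (j < n)%N by case/andP: hj.
have kn : (k < n)%N by case/andP: hk.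
have na : ~~ (n %| a1%:Z)%Z by apply: ndvd_nat; lia.
have nb : ~~ (n %| a2%:Z)%Z by apply: ndvd_nat; lia.
have a12n : (a1 < n)%N by lia.
have a2n : (a2 < n)%N by lia.
have nab : ~~ (n %| a1%:Z - a2%:Z)%Z.
  apply/negP => /(@dvd_sub_eq n a1 a2 a12n a2n) e; move: ha12; rewrite e ltnn //.
have nab' : ~~ (n %| a1%:Z + a2%:Z)%Z by rewrite -PoszD; apply: ndvd_nat; lia.
rewrite !eigE !PoszM.
have e1 : forall x y : nat, (n %| x ^ 2 + y ^ 2)%N = (n %| x%:Z ^+ 2 + y%:Z ^+ 2)%Z.
  by move=> x y; rewrite -!PoszX -PoszD natdvdz.
split.
  move/fwd => [h1 h2].
  case: (NT2 n _ _ _ _ pn na nb nab nab' h1 h2) => [h|h|[h h']].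
  - by constructor 1; apply: (@dvd_sub_eq n j k jn kn h).
  - by constructor 2; rewrite -natdvdz PoszD.
  - by constructor 3; rewrite !e1.
case => [->//|h|[h h']].
  have E1 : forall a : nat, Fz (a%:Z * j%:Z) = Fz (a%:Z * k%:Z).
    move=> a; apply: Fz_eq.
    have -> : (a%:Z * j%:Z) ^+ 2 - (a%:Z * k%:Z) ^+ 2 = a%:Z ^+ 2 * ((j%:Z - k%:Z) * (j%:Z + k%:Z)) by ring.
    by apply: dvdz_mull; apply: dvdz_mull; rewrite -PoszD natdvdz.
  by rewrite !E1.
rewrite e1 in h; rewrite e1 in h'.
have -> : Fz (a1%:Z * j%:Z) = Fz (a2%:Z * k%:Z).
  apply: Fz_eq.
  have -> : (a1%:Z * j%:Z) ^+ 2 - (a2%:Z * k%:Z) ^+ 2 =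
    a1%:Z ^+ 2 * (j%:Z ^+ 2 + k%:Z ^+ 2) - (a1%:Z ^+ 2 + a2%:Z ^+ 2) * k%:Z ^+ 2 by ring.
  by apply: rpredB; [apply: dvdz_mull | apply: dvdz_mulr].
have -> : Fz (a2%:Z * j%:Z) = Fz (a1%:Z * k%:Z).
  apply: Fz_eq.
  have -> : (a2%:Z * j%:Z) ^+ 2 - (a1%:Z * k%:Z) ^+ 2 =
    a2%:Z ^+ 2 * (j%:Z ^+ 2 + k%:Z ^+ 2) - (a1%:Z ^+ 2 + a2%:Z ^+ 2) * k%:Z ^+ 2 by ring.
  by apply: rpredB; [apply: dvdz_mull | apply: dvdz_mulr].
by rewrite addrC.
Qed.

Lemma eig0 : circ_eig R n a1 a2 0 = 4.
Proof. rewrite /circ_eig !muln0 expr0 invr1; ring. Qed.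

Lemma neq4 j : (0 < j < n)%N -> circ_eig R n a1 a2 j != 4.
Proof.
move=> hj; have na : ~~ (n %| a1%:Z)%Z by apply: ndvd_nat; lia.
have nj : ~~ (n %| j%:Z)%Z by apply: ndvd_nat.
apply/eqP; rewrite -eig0 !eigE !muln0 => /fwd [h1 _].
have : (n %| (a1 * j)%N%:Z * (a1 * j)%N%:Z)%Z by case: h1; rewrite expr0n /= subr0 expr2.
by rewrite primeM // orbb PoszM primeM // (negbTE na) (negbTE nj).
Qed.

Lemma mult4 : eig_mult R n a1 a2 4 = 1%N.
Proof.
have n0 := prime_gt0 pn.
rewrite /eig_mult (_ : [set j : 'I_n | circ_eig R n a1 a2 j == 4] = [set Ordinal n0]) ?cards1 //.
apply/setP => i; rewrite !inE.
have [i0|ipos] := posnP i.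
  have -> : i == Ordinal n0 by apply/eqP; apply: val_inj.
  by rewrite i0 eig0 eqxx.
rewrite (negbTE (neq4 _ _)); last by rewrite ipos ltn_ord.
apply/esym/negbTE/eqP => h; move: ipos; rewrite h /= ltnn.
by [].
Qed.

Lemma mult2 j : ~~ (n %| a1 ^ 2 + a2 ^ 2)%N -> (0 < j < n)%N ->
  eig_mult R n a1 a2 (circ_eig R n a1 a2 j) = 2%N.
Proof.
move=> hA hj.
have jn : (j < n)%N by case/andP: hj.
have njn : (n - j < n)%N by lia.
have n_odd : odd n.
  case: (even_prime pn) => // nE; move: n2; rewrite nE //.
set a := Ordinal jn; set b := Ordinal njn.
rewrite /eig_mult (_ : [set i : 'I_n | _ == _] = [set a; b]).
  rewrite cards2; suff -> : a != b by [].
  apply/negP => /eqP /(congr1 val) /= e.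
  have nE : n = j.*2 by rewrite -addnn; lia.
  by move: n_odd; rewrite nE odd_double.
apply/setP => i; rewrite !inE.
have [i0|ipos] := posnP i.
  rewrite -!val_eqE /= i0 eig0 eq_sym (negbTE (neq4 _ hj)).
  have : (0 != j) && (0 != n - j)%N by apply/andP; split; apply/eqP; lia.
  by case/andP => /negbTE -> /negbTE ->.
have hi : (0 < i < n)%N by rewrite ipos ltn_ord.
apply/idP/idP.
  move/eqP/(Heq i j hi hj) => [e|h|[h _]].
  - by apply/orP; left; rewrite -val_eqE /= e.
  - by apply/orP; right; rewrite -val_eqE /=; apply/eqP; apply: dvd_sum_eq.
  - by rewrite h in hA.
case/orP => /eqP e; apply/eqP; apply/(Heq i j hi hj).
  by constructor 1; rewrite e.
by constructor 2; rewrite e /= subnK ?dvdnn // ltnW.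
Qed.

Lemma main_sec :
  (~~ (n %| a1 ^ 2 + a2 ^ 2)%N ->
     [/\ circ_eig R n a1 a2 0 = 4,
         eig_mult R n a1 a2 4 = 1%N,
         (forall j : nat, (0 < j < n)%N ->
            eig_mult R n a1 a2 (circ_eig R n a1 a2 j) = 2%N) &
         (forall j k : nat, (0 < j < n)%N -> (0 < k < n)%N ->
            (circ_eig R n a1 a2 j = circ_eig R n a1 a2 k <->
             j = k \/ (n %| j + k)%N))]) /\
  ((n %| a1 ^ 2 + a2 ^ 2)%N ->
     forall j k : nat, (0 < j < n)%N -> (0 < k < n)%N ->
       (circ_eig R n a1 a2 j = circ_eig R n a1 a2 k <->
        [\/ j = k, (n %| j + k)%N | (n %| j ^ 2 + k ^ 2)%N])).
Proof.
split.
  move=> hA; split.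
  - exact: eig0.
  - exact: mult4.
  - by move=> j hj; apply: mult2.
  - move=> j k hj hk; rewrite Heq //; split => [[->|h|[h _]]|[->|h]].
    + by left.
    + by right.
    + by rewrite h in hA.
    + by constructor 1.
    + by constructor 2.
move=> hA j k hj hk; rewrite Heq //; split => [[->|h|[_ h]]|[->|h|h]]; by constructor.
Qed.

End Main.


Theorem proposition3 (R : realType) (n a1 a2 : nat) :
  prime n -> (1 <= a1)%N -> (a1 < a2)%N -> (2 * a2 <= n)%N ->
  (~~ (n %| a1 ^ 2 + a2 ^ 2)%N ->
     [/\ circ_eig R n a1 a2 0 = 4,
         eig_mult R n a1 a2 4 = 1%N,
         (forall j : nat, (0 < j < n)%N ->
            eig_mult R n a1 a2 (circ_eig R n a1 a2 j) = 2%N) &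
         (forall j k : nat, (0 < j < n)%N -> (0 < k < n)%N ->
            (circ_eig R n a1 a2 j = circ_eig R n a1 a2 k <->
             j = k \/ (n %| j + k)%N))]) /\
  ((n %| a1 ^ 2 + a2 ^ 2)%N ->
     forall j k : nat, (0 < j < n)%N -> (0 < k < n)%N ->
       (circ_eig R n a1 a2 j = circ_eig R n a1 a2 k <->
        [\/ j = k, (n %| j + k)%N | (n %| j ^ 2 + k ^ 2)%N])).
Proof. exact: main_sec. Qed.
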